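(* Consider $\mathrm{USD}_p$ with $p\in[0,1]$ and let $\xi>0$ be a constant. Let $\Phi_{up}(t) := u(t) - x_1(t) - x_2(t)$ and $T_u := \inf\{t \geq 0 : \Phi_{up}(t) > 6\xi\sqrt{n\log n}\}$. Let $\mathbf{x}(0)$ be an arbitrary configuration with $\Phi_{up}(0) < 2\xi\sqrt{n\log n}$. Then with high probability $T_u = \omega(n\log^2 n)$.
   Context: Population protocol with $n$ agents, each in a state from $\{1,2,\bot\}$ (Opinion 1, Opinion 2, undecided). At each time step a scheduler picks an ordered pair $(i,j)$ of agents uniformly at random, independently of the past; only the initiator $i$ changes state. In $\mathrm{USD}_p$: if the initiator is $2$ and the responder $1$, the initiator becomes $\bot$; if the initiator is $1$ and the responder $2$, the initiator becomes $\bot$ with probability $1-p$ and otherwise stays $1$; if the initiator is $\bot$, it adopts the responder's state; otherwise nothing changes. $x_1(t),x_2(t),u(t)$ are the numbers of agents in states $1,2,\bot$ after $t$ interactions. ''With high probability'' means with probability at least $1-n^{-c}$ for a constant $c>0$. *)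

(* Defs.v *)
From HB Require Import structures.
From mathcomp Require Import all_boot all_order all_algebra.
From mathcomp Require Import reals exp.
Set Implicit Arguments. Unset Strict Implicit. Unset Printing Implicit Defensive.
Import Order.TTheory GRing.Theory Num.Theory.
Local Open Scope ring_scope.

(* Agent states: Some true = opinion 1, Some false = opinion 2, None = undecided (bot). *)
Notation state := (option bool).
Definition Op1 : state := Some true.
Definition Op2 : state := Some false.
Definition Und : state := None.

Notation config n := {ffun 'I_n -> state}.

Definition cnt (n : nat) (c : config n) (s : state) : nat := #|[set i | c i == s]|.

(* USD_p rule: probability that an initiator in state a interacting with a
   responder in state b moves to state a'. *)
Definition rule_prob (R : realType) (p : R) (a b a' : state) : R :=
  if (a == Op2) && (b == Op1) then (a' == Und)%:R
  else if (a == Op1) && (b == Op2) then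
    (if a' == Und then 1 - p else if a' == Op1 then p else 0)
  else if a == Und then (a' == b)%:R
  else (a' == a)%:R.

Definition trans (R : realType) (p : R) (n : nat) (c c' : config n) : R :=
  \sum_(i : 'I_n) \sum_(j : 'I_n | j != i)
     ((n * n.-1)%:R)^-1 * rule_prob p (c i) (c j) (c' i)
       * ([forall k, (k != i) ==> (c' k == c k)])%:R.

Definition Phi_up (R : realType) (n : nat) (c : config n) : R :=
  (cnt c Und)%:R - (cnt c Op1)%:R - (cnt c Op2)%:R.

(* hit_prob p B t c = P( exists s <= t, X(s) \in B | X(0) = c ) for the
   Markov chain with kernel trans p; i.e. P(T_B <= t) where T_B is the
   hitting time of B. *)
Fixpoint hit_prob (R : realType) (p : R) (n : nat) (B : pred (config n))
    (t : nat) (c : config n) {struct t} : R :=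
  if B c then 1 else
  match t with
  | 0 => 0
  | t'.+1 => \sum_(c' : config n) trans p c c' * hit_prob p B t' c'
  end.

Definition up_set (R : realType) (xi : R) (n : nat) : pred (config n) :=
  fun c => 6 * xi * Num.sqrt (n%:R * ln (n%:R : R)) < Phi_up R c.
Arguments up_set {R} xi n.
Arguments hit_prob {R} p {n} B t c.

(* Main.v *)
Require Import Defs.
From HB Require Import structures.
From mathcomp Require Import all_boot all_order all_algebra.
From mathcomp Require Import reals exp.
From mathcomp Require Import sequences ring lra.
Import Order.TTheory GRing.Theory Num.Theory.
Local Open Scope ring_scope.

Lemma sum_opt (R : realType) (F : option bool -> R) :
  \sum_(s : option bool) F s = F None + F (Some true) + F (Some false).
Proof.
rewrite (bigD1 None) //= (bigD1 (Some true)) //= (bigD1 (Some false)) //=.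
rewrite big1 ?addr0 ?addrA //.
by case=> [[]|].
Qed.

Definition upd {n} (c : config n) (i : 'I_n) (s : state) : config n :=
  [ffun k => if k == i then s else c k].

Lemma cntE {n} (c : config n) s : cnt c s = (\sum_i (c i == s))%N.
Proof.
rewrite /cnt -sum1_card big_mkcond /=; apply: eq_bigr => i _.
by rewrite inE; case: (c i == s).
Qed.

Lemma cntR (R : realType) {n} (c : config n) s :
  ((cnt c s)%:R : R) = \sum_i ((c i == s)%:R : R).
Proof. by rewrite cntE natr_sum. Qed.

Lemma sum_ord1 (R : realType) n : \sum_(i < n) (1 : R) = n%:R.
Proof. by rewrite sumr_const card_ord. Qed.

Lemma cnt_tot (R : realType) {n} (c : config n) :
  ((cnt c Und)%:R + (cnt c Op1)%:R + (cnt c Op2)%:R : R) = n%:R.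
Proof.
rewrite !cntR -!big_split /= -sum_ord1; apply: eq_bigr => i _.
by case: (c i) => [[]|]; rewrite /Und /Op1 /Op2 /= ?addr0 ?add0r.
Qed.

Lemma Phi_upE (R : realType) {n} (c : config n) :
  Phi_up R c = 2 * (cnt c Und)%:R - n%:R.
Proof. rewrite /Phi_up -(cnt_tot R c); ring. Qed.

Lemma upd_cnt (R : realType) {n} (c : config n) i s :
  ((cnt (upd c i s) Und)%:R : R) =
  (cnt c Und)%:R - (c i == Und)%:R + (s == Und)%:R.
Proof.
rewrite !cntR (bigD1 i) //= [in RHS](bigD1 i) //= ffunE eqxx.
have -> : \sum_(k | k != i) (((upd c i s) k == Und)%:R : R) =
          \sum_(k | k != i) ((c k == Und)%:R : R).
  by apply: eq_bigr => k /negbTE kNi; rewrite ffunE kNi.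
ring.
Qed.

Lemma agreeE (R : realType) {n} (c c' : config n) i :
  (([forall k, (k != i) ==> (c' k == c k)])%:R : R) =
  \sum_s ((c' == upd c i s)%:R).
Proof.
case: forallP => H.
- rewrite (bigD1 (c' i)) //=.
  have -> : c' == upd c i (c' i).
    apply/eqP/ffunP => k; rewrite ffunE; case: eqP => [->//|/eqP kNi].
    exact/eqP/(implyP (H k)).
  rewrite big1 ?addr0 // => s sN.
  case: eqP => // E; move: sN; by rewrite E ffunE eqxx eqxx.
- rewrite big1 // => s _.
  case: eqP => // E; exfalso; apply: H => k; rewrite E ffunE.
  by case: eqP => //= _; rewrite eqxx.
Qed.

Lemma pick_sum (R : realType) (T : finType) (G : T -> R) d :
  \sum_(x : T) G x * (x == d)%:R = G d.
Proof.
rewrite (bigD1 d) //= eqxx mulr1 big1 ?addr0 // => x /negbTE ->.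
by rewrite mulr0.
Qed.

Lemma transE (R : realType) (p : R) n (c : config n) (F : config n -> R) :
  \sum_c' trans p c c' * F c' =
  \sum_i \sum_(j | j != i) ((n * n.-1)%:R)^-1 *
     \sum_s rule_prob p (c i) (c j) s * F (upd c i s).
Proof.
rewrite /trans.
under eq_bigr do rewrite mulr_suml.
rewrite exchange_big /=; apply: eq_bigr => i _.
under eq_bigr do rewrite mulr_suml.
rewrite exchange_big /=; apply: eq_bigr => j _.
rewrite mulr_sumr.
transitivity (\sum_(c' : config n) \sum_s
   (((n * n.-1)%:R)^-1 * rule_prob p (c i) (c j) (c' i) * F c') *
     (c' == upd c i s)%:R).
  apply: eq_bigr => c' _; rewrite agreeE mulr_sumr mulr_suml.
  by apply: eq_bigr => s _; ring.
rewrite exchange_big /=; apply: eq_bigr => s _.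
by rewrite pick_sum ffunE eqxx mulrA.
Qed.

Lemma sum_rule (R : realType) (p : R) a b : \sum_s rule_prob p a b s = 1.
Proof.
rewrite sum_opt /rule_prob /Op1 /Op2 /Und.
case: a => [[]|]; case: b => [[]|] /=; ring.
Qed.

Lemma rule_ge0 (R : realType) (p : R) a b s :
  0 <= p <= 1 -> 0 <= rule_prob p a b s.
Proof.
move=> /andP[p0 p1]; rewrite /rule_prob /Op1 /Op2 /Und.
case: a => [[]|]; case: b => [[]|]; case: s => [[]|] //=; lra.
Qed.

Lemma trans_ge0 (R : realType) (p : R) n (c c' : config n) :
  0 <= p <= 1 -> 0 <= trans p c c'.
Proof.
move=> hp; rewrite /trans; apply: sumr_ge0 => i _; apply: sumr_ge0 => j _.
apply: mulr_ge0; last by rewrite ler0n.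
by apply: mulr_ge0; [rewrite invr_ge0 ler0n | exact: rule_ge0].
Qed.

Lemma sum_neq (R : realType) n (i : 'I_n) (f : 'I_n -> R) :
  \sum_(j | j != i) f j = \sum_j f j - f i.
Proof. by rewrite [\sum_j _](bigD1 i) //= addrC addrK. Qed.

Lemma count_pairs (R : realType) {n} (c : config n) a b : a != b ->
  \sum_i \sum_(j | j != i) ((c i == a)%:R * (c j == b)%:R : R) =
  (cnt c a)%:R * (cnt c b)%:R.
Proof.
move=> ab; rewrite !cntR mulr_suml; apply: eq_bigr => i _.
rewrite sum_neq -mulr_sumr.
have -> : ((c i == a)%:R * (c i == b)%:R : R) = 0.
  by case: eqP => [->|_]; [rewrite (negbTE ab) mulr0 | rewrite mul0r].
by rewrite subr0.
Qed.

Lemma count_all (R : realType) n :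
  \sum_(i < n) \sum_(j | j != i) (1 : R) = n%:R * (n%:R - 1).
Proof.
under eq_bigr do rewrite sum_neq sum_ord1.
by rewrite sumr_const card_ord mulr_natl.
Qed.

Lemma trans_sum1 (R : realType) (p : R) n (c : config n) : (1 < n)%N ->
  \sum_c' trans p c c' = 1.
Proof.
move=> n1.
have -> : \sum_c' trans p c c' = \sum_c' trans p c c' * 1.
  by apply: eq_bigr => c' _; rewrite mulr1.
rewrite transE.
under eq_bigr do under eq_bigr do rewrite sum_opt.
transitivity (\sum_(i < n) \sum_(j | j != i) ((n * n.-1)%:R)^-1 * (1 : R)).
  apply: eq_bigr => i _; apply: eq_bigr => j _; congr (_ * _).
  by rewrite !mulr1 -sum_opt sum_rule.
under eq_bigr do rewrite -mulr_sumr.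
rewrite -mulr_sumr count_all.
have n0 : (0 < n)%N by apply: ltnW.
rewrite natrM.
have E : (n%:R - 1 : R) = n.-1%:R by rewrite -{1}(prednK n0) mulrSr addrK.
rewrite E mulVf // mulf_neq0 // pnatr_eq0 -lt0n //.
by rewrite -ltnS (prednK n0).
Qed.

Definition V {R : realType} {n} (b : R) (c : config n) : R :=
  expR (ln 2 * ((cnt c Und)%:R - b)).

Lemma Vupd (R : realType) {n} (b : R) (c : config n) i s :
  V b (upd c i s) = V b c * expR (ln 2 * ((s == Und)%:R - (c i == Und)%:R)).
Proof. by rewrite /V -expRD upd_cnt; congr expR; ring. Qed.

Lemma e1 (R : realType) : expR (ln 2) = 2 :> R.
Proof. by rewrite lnK // posrE. Qed.

Lemma g_le (R : realType) (p : R) a b : 0 <= p <= 1 ->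
  \sum_s rule_prob p a b s * expR (ln 2 * ((s == Und)%:R - (a == Und)%:R)) <=
  1 + (a == Op2)%:R * (b == Op1)%:R + (a == Op1)%:R * (b == Op2)%:R
    - 2^-1 * ((a == Und)%:R * (b == Op1)%:R + (a == Und)%:R * (b == Op2)%:R).
Proof.
move=> /andP[p0 p1].
have e2 : expR (- ln 2) = 2^-1 :> R by rewrite expRN e1.
rewrite sum_opt /rule_prob /Op1 /Op2 /Und.
case: a => [[]|]; case: b => [[]|] /=;
  rewrite ?subrr ?subr0 ?sub0r ?mulr0 ?mulr1 ?mulrN ?expR0 ?e1 ?e2 ?mulr1 ?e2; lra.
Qed.

Lemma g_le2 (R : realType) (p : R) a b : 0 <= p <= 1 ->
  \sum_s rule_prob p a b s * expR (ln 2 * ((s == Und)%:R - (a == Und)%:R)) <= 2.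
Proof.
move=> /andP[p0 p1].
have e2 : expR (- ln 2) = 2^-1 :> R by rewrite expRN e1.
rewrite sum_opt /rule_prob /Op1 /Op2 /Und.
case: a => [[]|]; case: b => [[]|] /=;
  rewrite ?subrr ?subr0 ?sub0r ?mulr0 ?mulr1 ?mulrN ?expR0 ?e1 ?e2 ?mulr1 ?e2; lra.
Qed.

Lemma kE (R : realType) n : (1 < n)%N ->
  ((n * n.-1)%:R)^-1 * (n%:R * (n%:R - 1)) = 1 :> R.
Proof.
move=> n1; have n0 : (0 < n)%N by apply: ltnW.
rewrite natrM.
have E : (n%:R - 1 : R) = n.-1%:R by rewrite -{1}(prednK n0) mulrSr addrK.
rewrite E mulVf // mulf_neq0 // pnatr_eq0 -lt0n //.
by rewrite -ltnS (prednK n0).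
Qed.

Lemma lin5 (R : realType) (I : finType) (P : I -> pred I)
  (f1 f2 f3 f4 f5 : I -> I -> R) :
  \sum_i \sum_(j | P i j) (f1 i j + f2 i j + f3 i j - 2^-1 * (f4 i j + f5 i j)) =
  \sum_i \sum_(j | P i j) f1 i j + \sum_i \sum_(j | P i j) f2 i j
  + \sum_i \sum_(j | P i j) f3 i j
  - 2^-1 * (\sum_i \sum_(j | P i j) f4 i j + \sum_i \sum_(j | P i j) f5 i j).
Proof.
have H : forall i, \sum_(j | P i j) (f1 i j + f2 i j + f3 i j - 2^-1 * (f4 i j + f5 i j)) =
  \sum_(j | P i j) f1 i j + \sum_(j | P i j) f2 i j + \sum_(j | P i j) f3 i j
  - 2^-1 * (\sum_(j | P i j) f4 i j + \sum_(j | P i j) f5 i j).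
  by move=> i; rewrite sumrB !big_split -mulr_sumr big_split.
rewrite (eq_bigr _ (fun i _ => H i)).
by rewrite sumrB !big_split -mulr_sumr big_split.
Qed.

Lemma sumH (R : realType) {n} (c : config n) :
  \sum_i \sum_(j | j != i)
   (1 + (c i == Op2)%:R * (c j == Op1)%:R + (c i == Op1)%:R * (c j == Op2)%:R
    - 2^-1 * ((c i == Und)%:R * (c j == Op1)%:R + (c i == Und)%:R * (c j == Op2)%:R))
  = n%:R * (n%:R - 1) + (cnt c Op2)%:R * (cnt c Op1)%:R + (cnt c Op1)%:R * (cnt c Op2)%:R
    - 2^-1 * ((cnt c Und)%:R * (cnt c Op1)%:R + (cnt c Und)%:R * (cnt c Op2)%:R) :> R.
Proof.
rewrite -count_all -!count_pairs //.
exact: lin5.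
Qed.

Lemma step (R : realType) (p : R) n (c : config n) (b : R) :
  0 <= p <= 1 -> (1 < n)%N ->
  \sum_c' trans p c c' * V b c' <= V b c + expR (ln 2 * (n%:R / 2 - b)).
Proof.
move=> hp n1.
have hg : forall i j, \sum_s rule_prob p (c i) (c j) s * V b (upd c i s) =
  V b c * \sum_s rule_prob p (c i) (c j) s *
     expR (ln 2 * ((s == Und)%:R - (c i == Und)%:R)).
  by move=> i j; rewrite mulr_sumr; apply: eq_bigr => s _; rewrite Vupd; ring.
rewrite transE.
under eq_bigr do under eq_bigr do rewrite hg.
have k0 : 0 <= ((n * n.-1)%:R)^-1 :> R by rewrite invr_ge0 ler0n.
have V0 : 0 <= V b c by exact: expR_ge0.
have l2 : 0 < ln 2 :> R by apply: ln_gt0; lra.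
have hk := @kE R n n1.
have ctot := cnt_tot R c.
have [hu|hu] := leP (n%:R : R) (2 * (cnt c Und)%:R).
- apply: (le_trans (y := ((n * n.-1)%:R)^-1 * V b c *
     \sum_i \sum_(j | j != i)
   (1 + (c i == Op2)%:R * (c j == Op1)%:R + (c i == Op1)%:R * (c j == Op2)%:R
    - 2^-1 * ((c i == Und)%:R * (c j == Op1)%:R + (c i == Und)%:R * (c j == Op2)%:R)))).
    rewrite mulr_sumr; apply: ler_sum => i _; rewrite mulr_sumr; apply: ler_sum => j _.
    by rewrite -mulrA ler_wpM2l // ler_wpM2l // g_le.
  rewrite sumH.
  have x10 : 0 <= (cnt c Op1)%:R :> R by rewrite ler0n.
  have x20 : 0 <= (cnt c Op2)%:R :> R by rewrite ler0n.
  set u := (cnt c Und)%:R : R in hu ctot *.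
  set x1 := (cnt c Op1)%:R : R in x10 ctot *.
  set x2 := (cnt c Op2)%:R : R in x20 ctot *.
  set k := ((n * n.-1)%:R)^-1 : R in k0 hk *.
  have eps0 : 0 <= expR (ln 2 * (n%:R / 2 - b)) :> R by exact: expR_ge0.
  have hs : x1 + x2 <= u by lra.
  have h1 : (x1 + x2) * (x1 + x2) <= u * (x1 + x2).
    by rewrite ler_wpM2r // addr_ge0.
  have h2 : 0 <= (x1 - x2) * (x1 - x2) by rewrite -expr2 sqr_ge0.
  have D : x2 * x1 + x1 * x2 - 2^-1 * (u * x1 + u * x2) <= 0 by nra.
  have : k * V b c * (n%:R * (n%:R - 1) + x2 * x1 + x1 * x2 - 2^-1 * (u * x1 + u * x2))
     = V b c + k * V b c * (x2 * x1 + x1 * x2 - 2^-1 * (u * x1 + u * x2)).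
    transitivity (k * (n%:R * (n%:R - 1)) * V b c +
       k * V b c * (x2 * x1 + x1 * x2 - 2^-1 * (u * x1 + u * x2))); first ring.
    by rewrite hk mul1r.
  move=> ->; have : k * V b c * (x2 * x1 + x1 * x2 - 2^-1 * (u * x1 + u * x2)) <= 0.
    by apply: mulr_ge0_le0 => //; apply: mulr_ge0.
  lra.
- apply: (le_trans (y := ((n * n.-1)%:R)^-1 * V b c *
     \sum_(i < n) \sum_(j | j != i) 2)).
    rewrite mulr_sumr; apply: ler_sum => i _; rewrite mulr_sumr; apply: ler_sum => j _.
    by rewrite -mulrA ler_wpM2l // ler_wpM2l // g_le2.
  have -> : \sum_(i < n) \sum_(j | j != i) (2 : R) = 2 * (n%:R * (n%:R - 1)).
    by rewrite -count_all mulr_sumr; apply: eq_bigr => i _; rewrite mulr_sumr;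
       apply: eq_bigr => j _; rewrite mulr1.
  have -> : ((n * n.-1)%:R)^-1 * V b c * (2 * (n%:R * (n%:R - 1))) = V b c + V b c.
    transitivity (((n * n.-1)%:R)^-1 * (n%:R * (n%:R - 1)) * (V b c + V b c));
      first ring.
    by rewrite hk mul1r.
  rewrite lerD2l /V ler_expR ler_pM2l //.
  lra.
Qed.

Lemma hit_bound (R : realType) (p : R) n (B : pred (config n)) (b eps : R) :
  0 <= p <= 1 -> (1 < n)%N -> 0 <= eps ->
  (forall c : config n, \sum_c' trans p c c' * V b c' <= V b c + eps) ->
  (forall c, B c -> 1 <= V b c) ->
  forall t c, hit_prob p B t c <= V b c + t%:R * eps.
Proof.
move=> hp n1 e0 hs hB; elim=> [|t IH] c /=.
- case: ifP => Bc; rewrite mul0r addr0; [exact: hB | exact: expR_ge0].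
- case: ifP => Bc.
  + apply: le_trans (hB c Bc) _; rewrite lerDl mulr_ge0 // ler0n.
  + apply: (le_trans (y := \sum_c' trans p c c' * (V b c' + t%:R * eps))).
      apply: ler_sum => c' _; apply: ler_wpM2l; [exact: trans_ge0 | exact: IH].
    under eq_bigr do rewrite mulrDr.
    rewrite big_split /= -mulr_suml trans_sum1 // mul1r.
    apply: le_trans (lerD (hs c) (lexx _)) _.
    rewrite -[t.+1]addn1 natrD mulrDl mul1r; lra.
Qed.

Theorem lemma10 (R : realType) (p xi : R) :
  0 <= p <= 1 -> 0 < xi ->
  forall K : R, 0 < K ->
  exists c : R, 0 < c /\
  exists N : nat, forall n : nat, (N <= n)%N ->
  forall x0 : config n,
    Phi_up R x0 < 2 * xi * Num.sqrt (n%:R * ln (n%:R : R)) ->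
  forall t : nat, t%:R <= K * n%:R * (ln (n%:R : R)) ^+ 2 ->
    hit_prob p (up_set xi n) t x0 <= (n%:R : R) `^ (- c).
Proof.
move=> hp hxi K hK.
exists 1; split; first exact: ltr01.
have l2p : 0 < ln (2 : R) by apply: ln_gt0; lra.
set l2 := ln (2 : R) in l2p *.
set A := ln (1 + K) + 4.
have lK : 0 <= ln (1 + K) by apply: ln_ge0; lra.
have A0 : 0 <= A by rewrite /A; lra.
set Bc := 2 * l2 * xi.
have Bp : 0 < Bc by rewrite /Bc !mulr_gt0 //.
set M := 1 + 4 * A ^+ 2 / Bc ^+ 2.
have M1 : 1 <= M.
  rewrite /M lerDl; apply: divr_ge0; last exact: sqr_ge0.
  by apply: mulr_ge0; [lra | exact: sqr_ge0].
exists (Num.Def.truncn (expR M)).+1.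
move=> n hn x0 hx0 t ht.
have hM : expR M <= n%:R.
  by apply: le_trans (ltW (truncnS_gt _)) _; rewrite ler_nat.
have n2 : 2 <= n%:R :> R.
  by have := expR_ge1Dx M; lra.
have n1 : (1 < n)%N by rewrite -(ler_nat R 2 n).
have npos : 0 < n%:R :> R by lra.
have hL : M <= ln (n%:R : R).
  by rewrite -[M in M <= _]expRK ler_ln // posrE ?expR_gt0.
set L := ln (n%:R : R) in hL ht hx0 *.
have L1 : 1 <= L by lra.
have nL : L <= n%:R by apply/ltW/ln_sublinear.
have eL : expR L = n%:R by rewrite /L lnK // posrE.
set s := Num.sqrt (n%:R * L) in hx0 *.
have s0 : 0 <= s by apply: sqrtr_ge0.
set b := n%:R / 2 + 3 * xi * s.
set eps := expR (l2 * (n%:R / 2 - b)).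
have eps0 : 0 <= eps by apply: expR_ge0.
have hB : forall c : config n, up_set xi n c -> 1 <= V b c.
  move=> c; rewrite /up_set Phi_upE -/L -/s => hc; rewrite /V -/l2.
  apply: le_trans (expR_ge1Dx _); rewrite lerDl; apply: mulr_ge0; first lra.
  rewrite /b -!mulrA in hc *; lra.
have H := @hit_bound R p n (up_set xi n) b eps hp n1 eps0
  (fun c => @step R p n c b hp n1) hB t x0.
apply: (le_trans H).
set E := expR (- (Bc * s)).
have hV : V b x0 <= E.
  rewrite /V -/l2 /E ler_expR.
  have : (cnt x0 Und)%:R - b <= -(2 * xi * s).
    by move: hx0; rewrite Phi_upE /b; lra.
  move/(ler_wpM2l (ltW l2p)); rewrite /Bc.
  by have -> : l2 * - (2 * xi * s) = - (2 * l2 * xi * s) by ring.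
have he : eps <= E.
  rewrite /eps /E ler_expR /b /Bc.
  have : 0 <= l2 * xi * s by rewrite !mulr_ge0 //; lra.
  have -> : l2 * (n%:R / 2 - (n%:R / 2 + 3 * xi * s)) = - (3 * (l2 * xi * s)).
    by ring.
  have -> : - (2 * l2 * xi * s) = - (2 * (l2 * xi * s)) by ring.
  lra.
have E0 : 0 <= E by apply: expR_ge0.
have t0 : 0 <= t%:R :> R by rewrite ler0n.
have hT : V b x0 + t%:R * eps <= (1 + K * n%:R * L ^+ 2) * E.
  have : t%:R * eps <= t%:R * E by apply: ler_wpM2l.
  have : t%:R * E <= K * n%:R * L ^+ 2 * E by apply: ler_wpM2r.
  rewrite mulrDl mul1r; lra.
apply: (le_trans hT).
have key : (1 + K * n%:R * L ^+ 2) * n%:R <= expR (Bc * s).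
  have LL : L ^+ 2 <= 4 * n%:R.
    have e2 : expR (L / 2) * expR (L / 2) = n%:R.
      by rewrite -expRD -eL; congr expR; field.
    have := expR_ge1Dx (L / 2).
    have L0 : 0 <= L / 2 by lra.
    move=> h; rewrite expr2; nra.
  have AB : 4 * A ^+ 2 <= Bc ^+ 2 * L.
    rewrite [Bc ^+ 2 * L]mulrC -ler_pdivrMr ?exprn_gt0 //.
    by apply: le_trans hL; rewrite /M lerDr ler01.
  have sq : s ^+ 2 = n%:R * L by rewrite sqr_sqrtr // mulr_ge0 //; lra.
  have AL : A * L <= Bc * s.
    rewrite -(ler_pXn2r (isT : (0 < 2)%N)) ?nnegrE; last first.
      - by rewrite mulr_ge0 //; lra.
      - by rewrite mulr_ge0 //; lra.
    rewrite [(A * L) ^+ 2]exprMn [(Bc * s) ^+ 2]exprMn sq.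
    have h1 : A ^+ 2 * L ^+ 2 <= A ^+ 2 * (4 * n%:R).
      by apply: ler_wpM2l => //; exact: sqr_ge0.
    have h2 : 4 * A ^+ 2 * n%:R <= Bc ^+ 2 * L * n%:R.
      by apply: ler_wpM2r => //; lra.
    apply: (le_trans h1); move: h2.
    have -> : A ^+ 2 * (4 * n%:R) = 4 * A ^+ 2 * n%:R by ring.
    by have -> : Bc ^+ 2 * (n%:R * L) = Bc ^+ 2 * L * n%:R by ring.
  have h3 : ln (1 + K) + 4 * L <= A * L.
    rewrite /A mulrDl; have : ln (1 + K) <= ln (1 + K) * L.
      by rewrite -{1}[ln (1 + K)]mulr1; apply: ler_wpM2l.
    lra.
  have h4 : (1 + K) * n%:R ^+ 4 = expR (ln (1 + K) + 4 * L).
    by rewrite expRD expRM_natl eL lnK // posrE; lra.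
  have h5 : (1 + K * n%:R * L ^+ 2) * n%:R <= (1 + K) * n%:R ^+ 4.
    have q1 : L ^+ 2 <= n%:R ^+ 2 by rewrite !expr2; apply: ler_pM => //; lra.
    have q2 : n%:R <= n%:R ^+ 4 :> R.
      by rewrite -{1}[n%:R]expr1; apply: ler_eXn2l => //; lra.
    have q3 : n%:R ^+ 2 * L ^+ 2 <= n%:R ^+ 4 :> R.
      have -> : n%:R ^+ 4 = n%:R ^+ 2 * n%:R ^+ 2 :> R by rewrite -exprD.
      by apply: ler_wpM2l => //; exact: sqr_ge0.
    have -> : (1 + K * n%:R * L ^+ 2) * n%:R = n%:R + K * (n%:R ^+ 2 * L ^+ 2).
      by ring.
    have : K * (n%:R ^+ 2 * L ^+ 2) <= K * n%:R ^+ 4 by apply: ler_wpM2l; lra.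
    lra.
  apply: (le_trans h5); rewrite h4 ler_expR; lra.
have -> : (n%:R : R) `^ (- 1) = expR (- L).
  by rewrite /powR ifF ?mulN1r // pnatr_eq0; apply/negbTE; rewrite -lt0n ltnW.
set X := 1 + K * n%:R * L ^+ 2 in key *.
have en : n%:R * expR (- L) = 1 by rewrite -eL -expRD subrr expR0.
have -> : X * E = X * n%:R * E * expR (- L).
  transitivity (X * E * (n%:R * expR (- L))); first by rewrite en mulr1.
  ring.
rewrite -[X in _ <= X]mul1r; apply: ler_wpM2r; first exact: expR_ge0.
apply: (le_trans (y := expR (Bc * s) * E)); first exact: ler_wpM2r.
by rewrite /E expRxMexpNx_1.
Qed.
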